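(* Let $m\in(1,2]$ and $U\in C^3(\mathbb{R}^d)$ such that there exists $A_1\ge0$ with $\|D^kU(q)\|\le A_1(\|q\|+1)^{m-k}$ for all $q$ and $k=2,3$. Let $T\in\mathbb{N}^*$ and $\gamma\in(0,m-1)$. (a) If $m\in(1,2)$ and $h_0>0$, there exist $\kappa>0$ and $R\ge0$ such that for all $h\in(0,h_0]$, all $q_0,p_0\in\mathbb{R}^d$ with $\|p_0\|\le\|q_0\|^\gamma$ and $\|q_0\|\ge R$, and all $i,j,k\in\{1,\dots,T\}$, $$\|\Phi^{q,i}_h(q_0,p_0)-\Phi^{q,j}_h(q_0,p_0)\|\le\kappa h\|\Phi^{q,k}_h(q_0,p_0)\|^{m-1}.$$ (b) If $m=2$, there exist $h_0>0$, $\kappa>0$ and $R\ge0$ such that the same inequality holds for all $h\in(0,h_0]$, all $q_0,p_0$ with $\|p_0\|\le\|q_0\|^\gamma$ and $\|q_0\|\ge R$, and all $i,j,k\in\{1,\dots,T\}$.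
   Context: $D^kU$ is the $k$-th differential with operator norm. For $h>0$ the leapfrog map is $\Phi_h=\Psi^{(1)}_h\circ\Psi^{(2)}_h\circ\Psi^{(1)}_h$ with $\Psi^{(1)}_h(q,p)=(q,p-(h/2)\nabla U(q))$ and $\Psi^{(2)}_h(q,p)=(q+hp,p)$; $\Phi^{\circ \ell}_h$ is its $\ell$-fold composition and $\Phi^{q,\ell}_h$ the position (first $d$ coordinates) component of $\Phi^{\circ\ell}_h$. *)

(* Defs.v *)
From HB Require Import structures.
From mathcomp Require Import all_boot all_order all_algebra.
From mathcomp Require Import all_classical all_reals all_analysis.
Set Implicit Arguments. Unset Strict Implicit. Unset Printing Implicit Defensive.
Import Order.TTheory GRing.Theory Num.Theory.
Import numFieldNormedType.Exports.
Local Open Scope ring_scope.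

Section Defs.
Variables (R : realType) (d : nat).
Local Notation V := 'rV[R]_d.

Definition enorm (v : V) : R := Num.sqrt (\sum_(i < d) v ord0 i ^+ 2).

Definition evec (i : 'I_d) : V := delta_mx ord0 i.

Definition partial (i : 'I_d) (f : V -> R) : V -> R := fun q => derive f q (evec i).

Definition C3 (U : V -> R) : Prop :=
  continuous U /\
  (forall i, (forall q, derivable U q (evec i)) /\ continuous (partial i U)) /\
  (forall i j, (forall q, derivable (partial i U) q (evec j)) /\
               continuous (partial j (partial i U))) /\
  (forall i j k, (forall q, derivable (partial j (partial i U)) q (evec k)) /\
               continuous (partial k (partial j (partial i U)))).

Definition D2 (U : V -> R) (q u v : V) : R := derive ('D_v U) q u.
Definition D3 (U : V -> R) (q u v w : V) : R := derive ('D_v ('D_w U)) q u.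

Definition opnorm2_le (U : V -> R) (q : V) (A : R) : Prop :=
  forall u v, enorm u <= 1 -> enorm v <= 1 -> `|D2 U q u v| <= A.
Definition opnorm3_le (U : V -> R) (q : V) (A : R) : Prop :=
  forall u v w, enorm u <= 1 -> enorm v <= 1 -> enorm w <= 1 ->
    `|D3 U q u v w| <= A.

Definition grad (U : V -> R) (q : V) : V := \row_i partial i U q.

Definition Psi1 (U : V -> R) (h : R) (x : V * V) : V * V :=
  (x.1, x.2 - (h / 2) *: grad U x.1).
Definition Psi2 (h : R) (x : V * V) : V * V := (x.1 + h *: x.2, x.2).
Definition Phi (U : V -> R) (h : R) (x : V * V) : V * V :=
  Psi1 U h (Psi2 h (Psi1 U h x)).
Definition Phiq (U : V -> R) (h : R) (l : nat) (x : V * V) : V :=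
  (iter l (Phi U h) x).1.

End Defs.

(* Main.v *)
Require Import Defs.
From HB Require Import structures.
From mathcomp Require Import all_boot all_order all_algebra.
From mathcomp Require Import all_classical all_reals all_analysis.
From mathcomp Require Import ring lra.
Import Order.TTheory GRing.Theory Num.Theory.
Import numFieldNormedType.Exports.
Set Implicit Arguments. Unset Strict Implicit. Unset Printing Implicit Defensive.
Local Open Scope ring_scope.
Section H.
Variables (R : realType) (W : normedModType R) (V : normedModType R).
Local Open Scope classical_set_scope.

Lemma dnbhs0N : (-%R : R -> R) @ (0:R)^' `=>` (0:R)^'.
Proof.
move=> A [e /= e0 He]; exists e => //= y /= hy y0.
apply: He; last by rewrite oppr_eq0.
by move: hy; rewrite /ball /= !sub0r opprK normrN.
Qed.

Lemma cvg_oppv (f : V -> W) x v : derivable f x v ->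
  (fun h : R => h^-1 *: ((f \o shift x) (h *: - v) - f x)) @ 0^' --> - 'D_v f x.
Proof.
move=> df.
set g := (fun h : R => h^-1 *: ((f \o shift x) (h *: v) - f x)).
have H : (g \o -%R) @ 0^' --> 'D_v f x := cvg_comp _ _ dnbhs0N df.
have -> : (fun h : R => h^-1 *: ((f \o shift x) (h *: - v) - f x)) =
  (fun h => - (g \o -%R) h).
  apply/funext => h /=; rewrite /g /=. rewrite invrN scaleNr scalerN -scaleNr opprK //.
exact: cvgN.
Qed.

Lemma derivable_oppv (f : V -> W) x v : derivable f x v -> derivable f x (- v).
Proof. by move=> df; apply/cvg_ex; exists (- 'D_v f x); apply: cvg_oppv. Qed.

Lemma derive_oppv (f : V -> W) x v : derivable f x v -> 'D_(- v) f x = - 'D_v f x.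
Proof. by move=> df; apply: cvg_lim => //; apply: cvg_oppv. Qed.

End H.
Section H2.
Variables (R : realType) (V : normedModType R).
Local Open Scope classical_set_scope.

Lemma line_quot (f : V -> R) x e t :
  (fun h : R => h^-1 *: (((fun s : R => f (x + s *: e)) \o shift t) (h *: 1) - f (x + t *: e)))
  = (fun h : R => h^-1 *: ((f \o shift (x + t *: e)) (h *: e) - f (x + t *: e))).
Proof.
apply/funext => h /=; congr (_ *: (f _ - _)).
by rewrite /shift /= scaler1 scalerDl addrCA.
Qed.

Lemma line_derivable (f : V -> R) x e t :
  derivable f (x + t *: e) e -> derivable (fun s : R => f (x + s *: e)) t 1.
Proof. by rewrite /derivable line_quot. Qed.

Lemma line_derive (f : V -> R) x e t :
  (fun s : R => f (x + s *: e))^`() t = 'D_e f (x + t *: e).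
Proof. by rewrite derive1E /derive line_quot. Qed.

End H2.
Section H3.
Variables (R : realType).
Local Open Scope classical_set_scope.

Lemma cmp1 (g F : R -> R) s : 0 <= s ->
  (forall t, t \in `[0, s]%R -> derivable g t 1) ->
  (forall t, t \in `[0, s]%R -> derivable F t 1) ->
  (forall t, t \in `]0, s[%R -> `|g^`() t| <= F^`() t) ->
  `|g s - g 0| <= F s - F 0.
Proof.
move=> s0 dg dF H.
have s0i : 0 \in `[0, s]%R by rewrite in_itv /= lexx s0.
have ssi : s \in `[0, s]%R by rewrite in_itv /= lexx s0.
have sub : forall t, t \in `]0, s[%R -> t \in `[0, s]%R.
  by move=> t; rewrite !in_itv /= => /andP[/ltW -> /ltW ->].
have h1 : (F - g) 0 <= (F - g) s.
  apply: (@ger0_derive1_le_cc _ (F - g) 0 s) => //.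
  - by move=> t /sub tI; apply: derivableB; [exact: dF|exact: dg].
  - move=> t tI; rewrite derive1E deriveB; [|exact: dF (sub _ tI)|exact: dg (sub _ tI)].
    rewrite -!derive1E subr_ge0; exact: le_trans (ler_norm _) (H _ tI).
  - apply: derivable_within_continuous => t tI.
    by apply: derivableB; [exact: dF|exact: dg].
have h2 : (F + g) 0 <= (F + g) s.
  apply: (@ger0_derive1_le_cc _ (F + g) 0 s) => //.
  - by move=> t /sub tI; apply: derivableD; [exact: dF|exact: dg].
  - move=> t tI; rewrite derive1E deriveD; [|exact: dF (sub _ tI)|exact: dg (sub _ tI)].
    rewrite -!derive1E; have := H t tI; rewrite ler_norml => /andP[]; lra.
  - apply: (@derivable_within_continuous _ _ (F + g)) => t tI.
    by apply: derivableD; [exact: dF|exact: dg].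
have h1' : F 0 - g 0 <= F s - g s := h1. have h2' : F 0 + g 0 <= F s + g s := h2.
rewrite ler_norml; apply/andP; split; lra.
Qed.

End H3.
Section N.
Variables (R : realType) (d : nat).
Local Notation V := 'rV[R]_d.

Definition n1 (v : V) : R := \sum_(j < d) `|v ord0 j|.

Lemma n1_ge0 (v : V) : 0 <= n1 v.
Proof. by apply: sumr_ge0 => j _. Qed.

Lemma n1D (x y : V) : n1 (x + y) <= n1 x + n1 y.
Proof.
rewrite /n1 -big_split /=; apply: ler_sum => j _; rewrite mxE; exact: ler_normD.
Qed.

Lemma n1Z (c : R) (x : V) : n1 (c *: x) = `|c| * n1 x.
Proof.
rewrite /n1 mulr_sumr; apply: eq_bigr => j _; by rewrite mxE normrM.
Qed.

Lemma n1N (x : V) : n1 (- x) = n1 x.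
Proof. by rewrite -scaleN1r n1Z normrN normr1 mul1r. Qed.

Lemma n1B (x y : V) : n1 (x - y) <= n1 x + n1 y.
Proof. by rewrite -(n1N y); exact: n1D. Qed.

Lemma coord_le_n1 (v : V) j : `|v ord0 j| <= n1 v.
Proof.
rewrite /n1 (bigD1 j) //= lerDl; by apply: sumr_ge0 => k _.
Qed.

Lemma sumsq_ge (v : V) j : v ord0 j ^+ 2 <= \sum_(k < d) v ord0 k ^+ 2.
Proof.
rewrite (bigD1 j) //= lerDl; apply: sumr_ge0 => k _; exact: sqr_ge0.
Qed.

Lemma coord_le_enorm (v : V) j : `|v ord0 j| <= enorm v.
Proof.
rewrite /enorm -sqrtr_sqr; apply: ler_wsqrtr; exact: sumsq_ge.
Qed.

Lemma enorm_ge0 (v : V) : 0 <= enorm v.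
Proof. exact: sqrtr_ge0. Qed.

Lemma enorm_le_n1 (v : V) : enorm v <= n1 v.
Proof.
rewrite /enorm -(ger0_norm (n1_ge0 v)) -sqrtr_sqr; apply: ler_wsqrtr.
rewrite expr2 {2}/n1 mulr_sumr; apply: ler_sum => j _.
rewrite -real_normK ?num_real // expr2; apply: ler_wpM2r => //; exact: coord_le_n1.
Qed.

Lemma n1_le_enorm (v : V) : n1 v <= d%:R * enorm v.
Proof.
rewrite /n1 mulr_natl. have -> : enorm v *+ d = \sum_(j < d) enorm v by rewrite sumr_const card_ord.
apply: ler_sum => j _.
exact: coord_le_enorm.
Qed.

Lemma enorm_evec (i : 'I_d) : enorm (evec R i) <= 1.
Proof.
rewrite /enorm /evec (bigD1 i) //= big1 ?addr0.
  by rewrite mxE !eqxx /= expr1n sqrtr1.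
by move=> k ki; rewrite mxE (negbTE ki) andbF expr0n.
Qed.

Lemma enorm_d0 (v : V) : d = 0%N -> enorm v = 0.
Proof. move=> d0; rewrite /enorm; move: v; rewrite d0 => v; by rewrite big_ord0 sqrtr0. Qed.

End N.

Section Step.
Variables (R : realType) (V : normedModType R).
Local Open Scope classical_set_scope.

Lemma step_bound (f : V -> R) y e s A a : 0 <= s -> 0 < a -> 0 <= A ->
  (forall t, derivable f (y + t *: e) e) ->
  (forall t, 0 <= t -> `|'D_e f (y + t *: e)| <= A * (t + 1) `^ (a - 1)) ->
  `|f (y + s *: e) - f y| <= A / a * ((s + 1) `^ a - 1).
Proof.
move=> s0 a0 A0 df hb.
pose F := (A / a) \*: (fun t : R => (@powR R ^~ a) (1 + t *: (1:R))).
have dP : forall t : R, 0 <= t -> is_derive (1 + t *: (1:R)) (1:R) (@powR R ^~ a) (a * (1 + t *: (1:R)) `^ (a - 1)).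
  move=> t t0; apply: is_derive1_powR; rewrite scaler1; lra.
have := @cmp1 R (fun t : R => f (y + t *: e)) F s s0.
have Fs : forall t, F t = A / a * (t + 1) `^ a.
  by move=> t; rewrite /F /= scaler1 addrC.
rewrite !Fs scale0r addr0 add0r powR1 mulrBr mulr1 => -> //.
- by move=> t _; apply: line_derivable.
- move=> t; rewrite in_itv /= => /andP[t0 _]; apply: derivableZ.
  apply: (@line_derivable R R (@powR R ^~ a) 1 1 t); by case: (dP t t0).
move=> t; rewrite in_itv /= => /andP[t0 _].
rewrite line_derive derive1E deriveZ; last first.
  apply: (@line_derivable R R (@powR R ^~ a) 1 1 t); by case: (dP t (ltW t0)).
rewrite -derive1E (@line_derive R R (@powR R ^~ a) 1 1 t) (@derive_val _ _ _ _ _ _ _ (dP t (ltW t0))).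
rewrite [X in _ <= X](_ : _ = A * (t + 1) `^ (a - 1)); first exact: hb (ltW t0).
by rewrite scaler1 [1 + t]addrC /GRing.scale /= mulrA divfK ?gt_eqF.

Qed.

End Step.

Section Grad.
Variables (R : realType) (d : nat).
Local Notation V := 'rV[R]_d.
Local Open Scope classical_set_scope.

Lemma powR_antiN (x y r : R) : 0 < x -> x <= y -> r <= 0 -> y `^ r <= x `^ r.
Proof.
move=> x0 xy r0; have y0 : 0 < y by exact: lt_le_trans xy.
have -> : r = - (- r) by rewrite opprK.
rewrite !(powRN _ (- r)) lef_pV2 ?posrE ?powR_gt0 //.
by apply: ge0_ler_powR; rewrite ?oppr_ge0 ?nnegrE // ltW.
Qed.

Lemma partial_growth (f : V -> R) A a (q : V) :
  0 < a -> a <= 1 -> 0 <= A ->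
  (forall z j, derivable f z (evec R j)) ->
  (forall z j, `|'D_(evec R j) f z| <= A * (enorm z + 1) `^ (a - 1)) ->
  `|f q - f 0| <= d%:R * (A / a * (n1 q + 1) `^ a).
Proof.
move=> a0 a1 A0 df hb.
pose y (k : nat) : V := \row_(l < d) (if (l < k)%N then q ord0 l else 0).
have y0 : y 0%N = 0 by apply/rowP => l; rewrite !mxE ltn0.
have yd : y d = q by apply/rowP => l; rewrite !mxE ltn_ord.
have yS : forall (k : nat) (hk : (k < d)%N),
    y k.+1 = y k + q ord0 (Ordinal hk) *: evec R (Ordinal hk).
  move=> k hk; apply/rowP => l; rewrite !mxE /=.
  have -> : (l == Ordinal hk) = (nat_of_ord l == k) by [].
  case: (ltngtP l k) => [lk|kl|lk].
  - by rewrite ltnS (ltnW lk) mulr0 addr0.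
  - by rewrite ltnS leqNgt kl mulr0 addr0.
  - by rewrite lk ltnSn mulr1 add0r; congr (q _ _); apply: val_inj.
have yk0 : forall k (hk : (k < d)%N), y k ord0 (Ordinal hk) = 0.
  by move=> k hk; rewrite mxE /= ?ltnn.
have C : 0 <= A / a * (n1 q + 1) `^ a.
  by apply: mulr_ge0; [apply: divr_ge0 => //; exact: ltW|exact: powR_ge0].
suff H : forall k, (k <= d)%N -> `|f (y k) - f 0| <= k%:R * (A / a * (n1 q + 1) `^ a).
  by have := H d (leqnn d); rewrite yd.
elim=> [_|k IH hk]; first by rewrite y0 subrr normr0 mul0r.
have {}IH := IH (ltnW hk).
set j := Ordinal hk.
have key : forall (e : V) s, 0 <= s -> `|s| = `|q ord0 j| -> `|e ord0 j| = 1 ->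
    (forall z, derivable f z e) ->
    (forall z, `|'D_e f z| <= A * (enorm z + 1) `^ (a - 1)) ->
    y k.+1 = y k + s *: e ->
    `|f (y k.+1) - f (y k)| <= A / a * (n1 q + 1) `^ a.
  move=> e s s0 sq e1 de hbe ->.
  apply: le_trans (step_bound s0 a0 A0 (fun t => de _) _) _.
    move=> t t0; apply: le_trans (hbe _) _; rewrite ler_wpM2l //.
    apply: powR_antiN; first lra.
      rewrite lerD2r; apply: le_trans (coord_le_enorm _ j).
      by rewrite !mxE /= ltnn add0r normrM e1 mulr1 ger0_norm.
    lra.
  rewrite ler_wpM2l //; first by apply: divr_ge0 => //; exact: ltW.
  apply: (@le_trans _ _ ((s + 1) `^ a)); first lra.
  apply: ge0_ler_powR; rewrite ?nnegrE; first exact: ltW.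
  - lra.
  - by apply: addr_ge0 => //; exact: n1_ge0.
  rewrite lerD2r -(ger0_norm s0) sq; exact: coord_le_n1.
have step : `|f (y k.+1) - f (y k)| <= A / a * (n1 q + 1) `^ a.
  have ej : `|evec R j ord0 j| = 1 by rewrite mxE !eqxx normr1.
  case: (leP 0 (q ord0 j)) => qs.
  - apply: (key (evec R j) (q ord0 j)).
    + exact: qs.
    + by [].
    + exact: ej.
    + by move=> z; exact: df.
    + by move=> z; exact: hb.
    + by rewrite (yS k hk).
  - apply: (key (- evec R j) (- q ord0 j)).
    + lra.
    + by rewrite normrN.
    + by rewrite mxE normrN.
    + by move=> z; apply: derivable_oppv.
    + by move=> z; rewrite derive_oppv // normrN.
    + by rewrite (yS k hk) scaleNr scalerN opprK.
rewrite -(subrK (f (y k)) (f (y k.+1))) -addrA.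
apply: le_trans (ler_normD _ _) _.
by rewrite -nat1r mulrDl mul1r lerD.
Qed.

End Grad.

Section Grad2.
Variables (R : realType) (d : nat).
Local Notation V := 'rV[R]_d.

Lemma grad_growth (U : V -> R) A a :
  0 < a -> a <= 1 -> 0 <= A ->
  (forall i j q, derivable (partial i U) q (evec R j)) ->
  (forall i j q, `|'D_(evec R j) (partial i U) q| <= A * (enorm q + 1) `^ (a - 1)) ->
  forall q, n1 (grad U q) <= (n1 (grad U 0) + d%:R * (d%:R * (A / a))) * (n1 q + 1) `^ a.
Proof.
move=> a0 a1 A0 dU bU q.
have P1 : 1 <= (n1 q + 1) `^ a.
  apply: (@le_trans _ _ (1 `^ a)); first by rewrite powR1.
  have := n1_ge0 q => nq.
  apply: ge0_ler_powR; rewrite ?nnegrE; lra.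
have C : 0 <= d%:R * (A / a * (n1 q + 1) `^ a).
  by apply: mulr_ge0 => //; apply: mulr_ge0; [apply: divr_ge0 => //; exact: ltW|exact: powR_ge0].
apply: (@le_trans _ _ (n1 (grad U 0) + d%:R * (d%:R * (A / a * (n1 q + 1) `^ a)))).
  rewrite {1 2}/n1.
  have -> : (d%:R * (d%:R * (A / a * (n1 q + 1) `^ a))) = \sum_(j < d) (d%:R * (A / a * (n1 q + 1) `^ a)).
    by rewrite sumr_const card_ord mulr_natl.
  rewrite -big_split /=; apply: ler_sum => i _; rewrite !mxE.
  rewrite -[X in `|X|](subrK (partial i U 0)) addrC.
  apply: le_trans (ler_normD _ _) _; rewrite lerD2r.
  apply: partial_growth => //.
rewrite mulrDl lerD //.
  by rewrite -[X in X <= _]mulr1 ler_wpM2l // n1_ge0.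
by rewrite !mulrA.
Qed.

End Grad2.

Fixpoint an {R : realType} (b0 K H : R) (n : nat) : R :=
  match n with 0%N => 0 | n'.+1 => an b0 K H n' + (b0 + n'%:R * (K * H)) + K * H / 2 end.

Section Dyn.
Variables (R : realType) (d : nat).
Local Notation V := 'rV[R]_d.

Lemma an_ge0 (b0 K H : R) n : 0 <= b0 -> 0 <= K -> 0 <= H -> 0 <= an b0 K H n.
Proof.
move=> b0p Kp Hp; elim: n => [|n IH] //=.
have : 0 <= K * H by exact: mulr_ge0.
have : 0 <= n%:R * (K * H) by apply: mulr_ge0; [exact: ler0n|exact: mulr_ge0].
lra.
Qed.

Lemma an_mono (b0 K H : R) n m : 0 <= b0 -> 0 <= K -> 0 <= H -> (n <= m)%N ->
  an b0 K H n <= an b0 K H m.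
Proof.
move=> b0p Kp Hp; elim: m => [|m IH].
  by rewrite leqn0 => /eqP ->.
rewrite leq_eqVlt => /orP[/eqP -> //|]; rewrite ltnS => /IH {}IH /=.
have : 0 <= K * H by exact: mulr_ge0.
have : 0 <= m%:R * (K * H) by apply: mulr_ge0; [exact: ler0n|exact: mulr_ge0].
lra.
Qed.

Lemma dyn (U : V -> R) (K Y X H h b0 : R) (q0 p0 : V) :
  0 <= K -> 0 <= Y -> 0 < h -> h <= H -> 0 <= b0 ->
  (forall q, n1 q <= 2 * X -> n1 (grad U q) <= K * Y) ->
  n1 q0 <= X -> n1 p0 <= b0 * Y ->
  forall n, an b0 K H n * h * Y <= X ->
    n1 ((iter n (Phi U h) (q0, p0)).1 - q0) <= an b0 K H n * h * Y /\
    n1 ((iter n (Phi U h) (q0, p0)).2) <= (b0 + n%:R * (K * H)) * Y.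
Proof.
move=> K0 Y0 h0 hH b00 G Xq Xp.
have H0 : 0 <= H by lra.
elim=> [_|n IH hn] /=.
  rewrite subrr !mul0r addr0; split => //; rewrite /n1 big1 // => i _; by rewrite mxE normr0.
have anS : an b0 K H n <= an b0 K H n.+1 by apply: an_mono => //.
have hY : 0 <= h * Y by apply: mulr_ge0 => //; lra.
have [IH1 IH2] := IH (le_trans (ler_wpM2r Y0 (ler_wpM2r (ltW h0) anS)) hn).
set x := iter n (Phi U h) (q0, p0) in IH1 IH2 *.
set qn := x.1 in IH1 *; set pn := x.2 in IH2 *.
have nq : forall v : V, n1 v <= n1 (v - q0) + X.
  move=> v; apply: le_trans (_ : n1 (v - q0) + n1 q0 <= _); last by rewrite lerD2l.
  by rewrite -{1}(subrK q0 v); exact: n1D.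
have Gqn : n1 (grad U qn) <= K * Y.
  apply: G; apply: le_trans (nq _) _.
  have : an b0 K H n * h * Y <= an b0 K H n.+1 * h * Y.
    by rewrite -!mulrA; apply: ler_wpM2r.
  lra.
set ph := pn - (h / 2) *: grad U qn.
have Nph : n1 ph <= (b0 + n%:R * (K * H)) * Y + H / 2 * (K * Y).
  apply: le_trans (n1B _ _) _; rewrite n1Z ger0_norm; last lra.
  apply: lerD => //.
  apply: ler_pM; try lra; exact: n1_ge0.
have q1 : (Phi U h x).1 = qn + h *: ph by [].
have p1 : (Phi U h x).2 = ph - (h / 2) *: grad U (qn + h *: ph) by [].
have Nq1 : n1 ((Phi U h x).1 - q0) <= an b0 K H n.+1 * h * Y.
  rewrite q1 addrAC; apply: le_trans (n1D _ _) _; rewrite n1Z ger0_norm; last lra.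
  rewrite /=.
  have e1 : h * n1 ph <= h * ((b0 + n%:R * (K * H)) * Y + H / 2 * (K * Y)).
    by apply: ler_wpM2l => //; lra.
  have -> : (an b0 K H n + (b0 + n%:R * (K * H)) + K * H / 2) * h * Y =
     an b0 K H n * h * Y + h * ((b0 + n%:R * (K * H)) * Y + H / 2 * (K * Y)).
    by rewrite /=; ring.
  lra.
split => //.
have Gq1 : n1 (grad U (qn + h *: ph)) <= K * Y.
  apply: G; rewrite -q1; apply: le_trans (nq _) _; lra.
apply: le_trans (n1B _ _) _; rewrite n1Z ger0_norm; last lra.
have e2 : h / 2 * n1 (grad U (qn + h *: ph)) <= H / 2 * (K * Y).
  apply: ler_pM; try lra; first exact: n1_ge0.
have -> : (b0 + n.+1%:R * (K * H)) * Y =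
    (b0 + n%:R * (K * H)) * Y + H / 2 * (K * Y) + H / 2 * (K * Y).
  by rewrite mulrS; field.
lra.
Qed.

End Dyn.

Section Final.
Variables (R : realType) (d : nat).
Local Notation V := 'rV[R]_d.

Lemma powR_mono (x y r : R) : 0 <= r -> 0 <= x -> x <= y -> x `^ r <= y `^ r.
Proof.
move=> r0 x0 xy; apply: ge0_ler_powR; rewrite ?nnegrE //; exact: le_trans xy.
Qed.

Lemma final (U : V -> R) (a gam B H : R) (T : nat) :
  0 < a -> a <= 1 -> gam <= a -> 0 <= B -> 0 < H ->
  (forall q, n1 (grad U q) <= B * (n1 q + 1) `^ a) ->
  forall h (q0 p0 : V), 0 < h -> h <= H -> 1 <= enorm q0 ->
  enorm p0 <= enorm q0 `^ gam ->
  an d%:R (3 * B) H T * h * (n1 q0) `^ a <= n1 q0 / 2 ->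
  forall i j k, (i <= T)%N -> (j <= T)%N -> (k <= T)%N ->
  enorm (Phiq U h i (q0, p0) - Phiq U h j (q0, p0)) <=
    (4 * d%:R * an d%:R (3 * B) H T + 1) * h * enorm (Phiq U h k (q0, p0)) `^ a.
Proof.
move=> a0 a1 ga B0 H0 gr h q0 p0 h0 hH e1 ep cond i j k iT jT kT.
set X := n1 q0.
set aT := an d%:R (3 * B) H T.
set Y := X `^ a.
have cond' : aT * h * Y <= X / 2 := cond.
have X1 : 1 <= X by apply: le_trans e1 (enorm_le_n1 _).
have Y0 : 0 <= Y by exact: powR_ge0.
have d1 : (1 <= d)%N.
  rewrite lt0n; apply/negP => /eqP d0; move: e1; rewrite (enorm_d0 q0 d0); lra.
have dR : 1 <= d%:R :> R by rewrite ler1n.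
have aT0 : 0 <= aT by apply: an_ge0; lra.
have Xp : n1 p0 <= d%:R * Y.
  apply: le_trans (n1_le_enorm _) _; apply: ler_wpM2l => //.
  apply: le_trans ep _; apply: (@le_trans _ _ (enorm q0 `^ a)).
    exact: ler_powR.
  apply: powR_mono => //; [lra|exact: enorm_ge0|exact: enorm_le_n1].
have Gb : forall q, n1 q <= 2 * X -> n1 (grad U q) <= 3 * B * Y.
  move=> q nq; apply: le_trans (gr q) _; rewrite -mulrA [3 * _]mulrC -mulrA.
  apply: ler_wpM2l => //.
  apply: (@le_trans _ _ ((3 * X) `^ a)).
    apply: powR_mono; [lra| |lra].
    have := n1_ge0 q; lra.
  rewrite powRM; [|lra|lra]; rewrite [Y * 3]mulrC ler_wpM2r //.
  by apply: ler1_powR; lra.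
have hY : 0 <= h * Y by apply: mulr_ge0 => //; lra.
have qn : forall n, (n <= T)%N ->
    n1 ((iter n (Phi U h) (q0, p0)).1 - q0) <= aT * h * Y.
  move=> n nT.
  have mono : an d%:R (3 * B) H n <= aT by apply: an_mono; try lra; exact: nT.
  have mono' : an d%:R (3 * B) H n * h * Y <= aT * h * Y.
    by rewrite -!mulrA; apply: ler_wpM2r.
  have cn : an d%:R (3 * B) H n * h * Y <= X by lra.
  have [D1 _] := @dyn R d U (3 * B) Y X H h d%:R q0 p0 ltac:(lra) Y0 h0 hH
      (ler0n _ _) Gb (lexx _) Xp n cn.
  exact: le_trans D1 mono'.
set E := enorm (Phiq U h k (q0, p0)).
have XE : X <= 2 * d%:R * E.
  have := qn k kT; rewrite -/(Phiq U h k (q0, p0)) => Dk.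
  have n1k : X <= n1 (Phiq U h k (q0, p0) - q0) + n1 (Phiq U h k (q0, p0)).
    rewrite /X -n1N {1}(_ : - q0 = (Phiq U h k (q0, p0) - q0) - Phiq U h k (q0, p0)).
      exact: n1B.
    by rewrite addrAC subrr add0r.
  have := n1_le_enorm (Phiq U h k (q0, p0)); rewrite -/E => dE.
  lra.
have E0 : 0 <= E by exact: enorm_ge0.
have YE : Y <= 2 * d%:R * E `^ a.
  apply: (@le_trans _ _ ((2 * d%:R * E) `^ a)).
    apply: powR_mono => //; [lra|lra].
  rewrite powRM; [|lra|lra]; rewrite ler_wpM2r ?powR_ge0 //.
  by apply: ler1_powR; lra.
have LHS : enorm (Phiq U h i (q0, p0) - Phiq U h j (q0, p0)) <= 2 * (aT * h * Y).
  apply: le_trans (enorm_le_n1 _) _.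
  have -> : Phiq U h i (q0, p0) - Phiq U h j (q0, p0) =
      (Phiq U h i (q0, p0) - q0) - (Phiq U h j (q0, p0) - q0).
    by rewrite opprB addrA subrK.
  apply: le_trans (n1B _ _) _.
  have := qn i iT; have := qn j jT; rewrite /Phiq; lra.
apply: le_trans LHS _.
have Ea : 0 <= E `^ a by exact: powR_ge0.
have : aT * h * Y <= aT * h * (2 * d%:R * E `^ a).
  apply: ler_wpM2l => //; apply: mulr_ge0 => //; lra.
have : 0 <= h * E `^ a by apply: mulr_ge0 => //; lra.
move=> p q; rewrite -/E.
have -> : (4 * d%:R * aT + 1) * h * E `^ a = 2 * (aT * h * (2 * d%:R * E `^ a)) + h * E `^ a.
  by ring.
lra.
Qed.

End Final.

Unset Implicit Arguments.

Theorem lemma13 (R : realType) (d : nat) (m : R) (U : 'rV[R]_d -> R) :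
  1 < m <= 2 ->
  C3 U ->
  (exists A1 : R, 0 <= A1 /\
     forall q : 'rV[R]_d,
       opnorm2_le U q (A1 * (enorm q + 1) `^ (m - 2)) /\
       opnorm3_le U q (A1 * (enorm q + 1) `^ (m - 3))) ->
  forall (T : nat) (gamma : R), (0 < T)%N -> 0 < gamma < m - 1 ->
  (m < 2 ->
   forall h0 : R, 0 < h0 ->
   exists kappa R0 : R, 0 < kappa /\ 0 <= R0 /\
     forall h : R, 0 < h <= h0 ->
     forall q0 p0 : 'rV[R]_d,
       enorm p0 <= enorm q0 `^ gamma -> R0 <= enorm q0 ->
       forall i j k : nat, (1 <= i <= T)%N -> (1 <= j <= T)%N -> (1 <= k <= T)%N ->
         enorm (Phiq U h i (q0, p0) - Phiq U h j (q0, p0))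
           <= kappa * h * enorm (Phiq U h k (q0, p0)) `^ (m - 1))
  /\
  (m = 2 ->
   exists h0 kappa R0 : R, 0 < h0 /\ 0 < kappa /\ 0 <= R0 /\
     forall h : R, 0 < h <= h0 ->
     forall q0 p0 : 'rV[R]_d,
       enorm p0 <= enorm q0 `^ gamma -> R0 <= enorm q0 ->
       forall i j k : nat, (1 <= i <= T)%N -> (1 <= j <= T)%N -> (1 <= k <= T)%N ->
         enorm (Phiq U h i (q0, p0) - Phiq U h j (q0, p0))
           <= kappa * h * enorm (Phiq U h k (q0, p0)) `^ (m - 1)).
Proof.
move=> /andP[m1 m2] hC3 [A1 [A10 hA]] T gam T0 /andP[g0 gm].
have a0 : 0 < m - 1 by lra.
have a1 : m - 1 <= 1 by lra.
have ga : gam <= m - 1 by lra.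
have dU : forall i j q, derivable (partial i U) q (evec R j).
  by move=> i j q; exact: ((hC3.2.2.1 i j).1 q).
have bU : forall i j q, `|'D_(evec R j) (partial i U) q| <= A1 * (enorm q + 1) `^ ((m - 1) - 1).
  move=> i j q.
  have := (hA q).1 (evec R j) (evec R i) (enorm_evec _ _) (enorm_evec _ _).
  by rewrite (_ : m - 2 = m - 1 - 1) //; ring.
have gr := grad_growth a0 a1 A10 dU bU.
set B := n1 (grad U 0) + d%:R * (d%:R * (A1 / (m - 1))) in gr.
have B0 : 0 <= B.
  apply: addr_ge0; first exact: n1_ge0.
  apply: mulr_ge0 => //; apply: mulr_ge0 => //; apply: divr_ge0 => //; lra.
have dR : 0 <= d%:R :> R by exact: ler0n.
split.
- move=> m2' h0 h00.
  set aT := an d%:R (3 * B) h0 T.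
  have aT0 : 0 <= aT by apply: an_ge0; lra.
  set M := Num.max 1 ((2 * aT * h0) `^ (1 / (1 - (m - 1)))).
  have M1 : 1 <= M by rewrite le_max lexx.
  have k0 : 0 < 4 * d%:R * aT + 1.
    have : 0 <= d%:R * aT by exact: mulr_ge0.
    lra.
  exists (4 * d%:R * aT + 1), M; split => //; split; first lra.
  move=> h /andP[hp hh] q0 p0 hp0 hq0 i j k /andP[_ iT] /andP[_ jT] /andP[_ kT].
  apply: (final a0 a1 ga B0 h00 gr hp hh) => //; first lra.
  set X := n1 q0.
  have XM : M <= X by apply: le_trans hq0 (enorm_le_n1 _).
  have X0 : 0 <= X by lra.
  set P := X `^ (m - 1); set Q := X `^ (1 - (m - 1)).
  have XPQ : X = P * Q.
    rewrite /P /Q -powRD; last by rewrite addrC subrK oner_eq0.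
    by rewrite addrC subrK powRr1.
  have P0 : 0 <= P by exact: powR_ge0.
  have e0 : 0 < 1 - (m - 1) by lra.
  have QM : 2 * aT * h0 <= Q.
    apply: (@le_trans _ _ (M `^ (1 - (m - 1)))); last first.
      by apply: powR_mono => //; lra.
    apply: (@le_trans _ _ (((2 * aT * h0) `^ (1 / (1 - (m - 1)))) `^ (1 - (m - 1)))).
      rewrite -powRrM mul1r mulVf ?gt_eqF // powRr1 //.
      by apply: mulr_ge0; lra.
    apply: powR_mono; [lra|exact: powR_ge0|by rewrite le_max lexx orbT].
  have f1 : aT * h * P <= aT * h0 * P.
    by apply: ler_wpM2r => //; apply: ler_wpM2l.
  have f2 : P * (2 * aT * h0) <= P * Q by apply: ler_wpM2l.
  rewrite XPQ -/aT; lra.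
- move=> m2e.
  set aT := an d%:R (3 * B) 1 T.
  have aT0 : 0 <= aT by apply: an_ge0; lra.
  have k0 : 0 < 4 * d%:R * aT + 1.
    have : 0 <= d%:R * aT by exact: mulr_ge0.
    lra.
  have hp0 : 0 < 1 / (2 * aT + 2) by apply: divr_gt0; lra.
  have hle : 1 / (2 * aT + 2) <= 1 by rewrite ler_pdivrMr; lra.
  have ah : aT * (1 / (2 * aT + 2)) <= 1 / 2.
    by rewrite mulrA mulr1 ler_pdivrMr ?mul1r; lra.
  exists (1 / (2 * aT + 2)), (4 * d%:R * aT + 1), 1.
  split => //; split => //; split; first lra.
  move=> h /andP[hp hh] q0 p0 hp0' hq0 i j k /andP[_ iT] /andP[_ jT] /andP[_ kT].
  apply: (final a0 a1 ga B0 ltr01 gr hp) => //; first lra.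
  set X := n1 q0.
  have X0 : 0 <= X by apply: le_trans (enorm_le_n1 _); lra.
  rewrite m2e (_ : 2 - 1 = 1 :> R); last by lra.
  rewrite powRr1 //.
  have f1 : aT * h <= aT * (1 / (2 * aT + 2)) by apply: ler_wpM2l.
  have f2 : aT * h * X <= 1 / 2 * X by apply: ler_wpM2r => //; lra.
  rewrite -/aT; lra.
Qed.
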